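(* Suppose Assumptions 1, 2 and 4 hold, and let $\mathcal{B}=\mathcal{B}_\beta\times\mathcal{B}_\gamma\subseteq\Theta$ with $\mathcal{B}_\beta\subset\mathbb{R}^k$ and $\mathcal{B}_\gamma\subset\Theta_\gamma$ compact. Then for every $\theta\in\mathcal{B}$ the matrix $$\Psi(\theta)=E\begin{pmatrix}\frac{XX'}{s(X'\gamma)} & \frac{XX'}{s(X'\gamma)}s_1(X'\gamma)e(Y,X,\theta)\\ \frac{XX'}{s(X'\gamma)}s_1(X'\gamma)e(Y,X,\theta) & \frac{XX'}{s(X'\gamma)}\{s_1(X'\gamma)e(Y,X,\theta)\}^2\end{pmatrix}$$ is positive definite.
   Context: Let $Y$ be a scalar random variable and $X$ a random $k\times1$ vector whose first component equals $1$; let $\mathcal{X}$ denote the support of $X$. Write $\mu(X)=E[Y\mid X]$ and $\sigma(X)^2=E[(Y-\mu(X))^2\mid X]$. Let $s$ be a positive scale function, write $s_j(t)=\partial^j s(t)/\partial t^j$ for $j=1,2,3$, and set $\Theta_\gamma=\{\gamma\in\mathbb{R}^k:\Pr[s(X'\gamma)>0]=1\}$ and $\Theta=\mathbb{R}^k\times\Theta_\gamma$. For $\theta=(\beta,\gamma)\in\Theta$ put $e(Y,X,\theta)=(Y-X'\beta)/s(X'\gamma)$. Assumption 1: for $a=0$ or $a=-\infty$, $s:(a,\infty)\to(0,\infty)$ is three times differentiable, strictly increasing and convex, with $\lim_{t\to a}s(t)=0$ and $\lim_{t\to\infty}s(t)=\infty$. Assumption 2: $x\mapsto\sigma(x)^2$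 is bounded away from $0$ uniformly on $\mathcal{X}$. Assumption 4: for all $\gamma\in\Theta_\gamma$, $E[XX'/s(X'\gamma)]$ is nonsingular. *)

(* Defs.v *)
From HB Require Import structures.
From mathcomp Require Import all_boot all_order all_algebra.
From mathcomp Require Import all_classical all_reals all_analysis.
From mathcomp Require Import measurable_realfun.
Set Implicit Arguments. Unset Strict Implicit. Unset Printing Implicit Defensive.
Import Order.TTheory GRing.Theory Num.Theory.
Import numFieldNormedType.Exports.
Local Open Scope classical_set_scope.
Local Open Scope ring_scope.

Section Defs.
Context {d : measure_display} {Omega : measurableType d} {R : realType}.

Definition xdot {k} (X : 'I_k -> Omega -> R) (b : 'cV[R]_k) (w : Omega) : R :=
  \sum_(i < k) X i w * b i ord0.

Definition xvec {k} (X : 'I_k -> Omega -> R) (w : Omega) : 'cV[R]_k :=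
  \col_i X i w.

Definition sigmaX_gen {k} (X : 'I_k -> Omega -> R) : set (set Omega) :=
  [set A | exists i B, measurable B /\ A = X i @^-1` B].

Definition sigmaX_meas {k} (X : 'I_k -> Omega -> R) (f : Omega -> R) :=
  forall B : set R, measurable B -> <<s sigmaX_gen X>> (f @^-1` B).
Definition sigmaX_meas_e {k} (X : 'I_k -> Omega -> R) (f : Omega -> \bar R) :=
  forall B : set (\bar R), measurable B -> <<s sigmaX_gen X>> (f @^-1` B).

Definition supportX (P : probability Omega R) {k} (X : 'I_k -> Omega -> R)
    : set 'cV[R]_k :=
  [set x | forall e : R, 0 < e -> (0 < P (xvec X @^-1` ball x e))%E].

(* mu : R^k -> R is (a version of) x |-> E[Y | X = x], i.e. mu(X) = E[Y|X] *)
Definition is_cond_mean (P : probability Omega R) {k} (X : 'I_k -> Omega -> R)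
    (Y : Omega -> R) (mu : 'cV[R]_k -> R) :=
  [/\ sigmaX_meas X (fun w => mu (xvec X w)),
      P.-integrable setT (EFin \o Y),
      P.-integrable setT (fun w => (mu (xvec X w))%:E) &
      forall A, <<s sigmaX_gen X>> A ->
        (\int[P]_(w in A) (Y w)%:E = \int[P]_(w in A) (mu (xvec X w))%:E)%E].

(* sig2 : R^k -> [0,+oo] is (a version of) x |-> E[(Y - mu(X))^2 | X = x] *)
Definition is_cond_var (P : probability Omega R) {k} (X : 'I_k -> Omega -> R)
    (Y : Omega -> R) (mu : 'cV[R]_k -> R) (sig2 : 'cV[R]_k -> \bar R) :=
  [/\ sigmaX_meas_e X (fun w => sig2 (xvec X w)),
      (forall x, (0 <= sig2 x)%E) &
      forall A, <<s sigmaX_gen X>> A ->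
        (\int[P]_(w in A) ((Y w - mu (xvec X w)) ^+ 2)%:E
           = \int[P]_(w in A) sig2 (xvec X w))%E].

Definition EXXf {k} (P : probability Omega R) (X : 'I_k -> Omega -> R)
    (f : Omega -> R) : 'M[R]_k :=
  \matrix_(i, j) \int[P]_(w in setT) (X i w * X j w * f w).

Definition XXf_integrable {k} (P : probability Omega R) (X : 'I_k -> Omega -> R)
    (f : Omega -> R) :=
  forall i j, P.-integrable setT (fun w => (X i w * X j w * f w)%:E).

End Defs.

Definition scale_domain {R : realType} (a : \bar R) : set R :=
  [set t | (a < t%:E)%E].

Definition assumption1 {R : realType} (a : \bar R) (s : R -> R) :=
  let D := scale_domain a in
  [/\ a = 0%E \/ a = -oo%E,
      (forall t, D t -> 0 < s t),
      (forall t, D t -> derivable s t 1 /\ derivable (derive1 s) t 1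
                        /\ derivable (derive1 (derive1 s)) t 1),
      (forall x y, D x -> D y -> x < y -> s x < s y) /\
      (forall x y l, D x -> D y -> 0 <= l <= 1 ->
          s (l * x + (1 - l) * y) <= l * s x + (1 - l) * s y) &
      [/\ (a = 0%E -> s t @[t --> 0^'+] --> 0),
      (a = -oo%E -> s t @[t --> -oo] --> 0) &
      s t @[t --> +oo] --> +oo]].

Definition posdef {R : realType} {m} (M : 'M[R]_m) :=
  M^T = M /\ forall v : 'cV[R]_m, v != 0 -> 0 < (v^T *m M *m v) ord0 ord0.

Section Psi.
Context {d : measure_display} {Omega : measurableType d} {R : realType}.
Local Open Scope ring_scope.

(* Theta_gamma = {gamma : Pr[s(X'gamma) > 0] = 1}; since s is only defined on
   (a,+oo), "s(X'gamma) > 0" includes X'gamma lying in that domain *)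
Definition Theta_gamma (P : probability Omega R) {k} (X : 'I_k -> Omega -> R)
    (a : \bar R) (s : R -> R) : set 'cV[R]_k :=
  [set g | P [set w | (a < (xdot X g w)%:E)%E /\ 0 < s (xdot X g w)] = 1%E].

Definition eres {k} (X : 'I_k -> Omega -> R) (Y : Omega -> R) (s : R -> R)
    (b g : 'cV[R]_k) (w : Omega) : R :=
  (Y w - xdot X b w) / s (xdot X g w).

Definition psi_w0 {k} (X : 'I_k -> Omega -> R) (s : R -> R) (g : 'cV[R]_k)
    (w : Omega) : R := (s (xdot X g w))^-1.
Definition psi_w1 {k} (X : 'I_k -> Omega -> R) (Y : Omega -> R) (s : R -> R)
    (b g : 'cV[R]_k) (w : Omega) : R :=
  (s (xdot X g w))^-1 * (derive1 s (xdot X g w) * eres X Y s b g w).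
Definition psi_w2 {k} (X : 'I_k -> Omega -> R) (Y : Omega -> R) (s : R -> R)
    (b g : 'cV[R]_k) (w : Omega) : R :=
  (s (xdot X g w))^-1 * (derive1 s (xdot X g w) * eres X Y s b g w) ^+ 2.

Definition Psi (P : probability Omega R) {k} (X : 'I_k -> Omega -> R)
    (Y : Omega -> R) (s : R -> R) (b g : 'cV[R]_k) : 'M[R]_(k + k) :=
  block_mx (EXXf P X (psi_w0 X s g)) (EXXf P X (psi_w1 X Y s b g))
           (EXXf P X (psi_w1 X Y s b g)) (EXXf P X (psi_w2 X Y s b g)).

Definition Psi_exists (P : probability Omega R) {k} (X : 'I_k -> Omega -> R)
    (Y : Omega -> R) (s : R -> R) (b g : 'cV[R]_k) :=
  [/\ XXf_integrable P X (psi_w0 X s g), XXf_integrable P X (psi_w1 X Y s b g)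
    & XXf_integrable P X (psi_w2 X Y s b g)].

End Psi.

(* Main.v *)
Require Import Defs.
From HB Require Import structures.
From mathcomp Require Import all_boot all_order all_algebra.
From mathcomp Require Import all_classical all_reals all_analysis.
From mathcomp Require Import measurable_realfun.
From mathcomp Require Import ring lra.
Import Order.TTheory GRing.Theory Num.Theory.
Import numFieldNormedType.Exports.
Local Open Scope classical_set_scope.
Local Open Scope ring_scope.
Section scale.
Context {R : realType}.

Lemma dq_cvg (s : R -> R) t : derivable s t 1 ->
  (fun n : nat => n.+1%:R * (s (n.+1%:R^-1 + t) - s t)) @ \oo --> derive1 s t.
Proof.
move=> ds.
have H : (fun h : R => h^-1 *: (s (h + t) - s t)) @ 0^' --> derive1 s t.
  have E : (fun h : R => h^-1 *: ((s \o shift t) (h *: (1:R)) - s t)) =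
           (fun h => h^-1 *: (s (h + t) - s t)).
    by apply/funext => h; congr (_ *: (s (_ + _) - _)); exact: mulr1.
  move: ds; rewrite /derivable E => ds.
  rewrite /derive1; exact: ds.
move/cvgr_dnbhsP : H => /(_ (fun n => n.+1%:R^-1)) H.
have : (fun n : nat => (n.+1%:R^-1)^-1 *: (s (n.+1%:R^-1 + t) - s t)) @ \oo --> derive1 s t.
  apply: H; split.
    by move=> n; rewrite invr_eq0 pnatr_eq0.
  exact: cvg_harmonic.
by under eq_fun do rewrite invrK.
Qed.


Lemma D_left (a : \bar R) t : (a < t%:E)%E -> exists x : R, (a < x%:E)%E /\ x < t.
Proof.
case: a => [r| |] //=.
- rewrite lte_fin => rt; exists ((r + t) / 2); split.
    by rewrite lte_fin; lra.
  lra.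
- by move=> _; exists (t - 1); split; [exact: ltNyr | lra].
Qed.

Lemma s1_pos (a : \bar R) (s : R -> R) : assumption1 a s ->
  forall t, scale_domain a t -> 0 < derive1 s t.
Proof.
move=> [_ spos sder [sinc scvx] _] t Dt.
have [x [Dx xt]] := D_left _ _ Dt.
have ds := (sder t Dt).1.
have dq := dq_cvg _ _ ds.
pose m := (s t - s x) / (t - x).
have m0 : 0 < m.
  by apply: divr_gt0; [rewrite subr_gt0; exact: sinc | rewrite subr_gt0].
apply: (lt_le_trans m0).
rewrite -(cvg_lim _ dq) //.
apply: limr_ge; first by apply/cvg_ex; eexists; exact: dq.
near=> n.
set N : R := n.+1%:R.
have N0 : 0 < N by rewrite /N ltr0n.
set h := N^-1.
have h0 : 0 < h by rewrite invr_gt0.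
have hN : N * h = 1 by rewrite /h divff // gt_eqF.
set y := h + t.
have Dy : scale_domain a y.
  rewrite /scale_domain /=; apply: (lt_trans Dt); rewrite lte_fin /y; lra.
pose l := h / (y - x).
have yx0 : 0 < y - x by rewrite /y; lra.
have l0 : 0 <= l by rewrite /l divr_ge0 // ltW.
have l1 : l <= 1 by rewrite /l ler_pdivrMr // mul1r /y; lra.
have := scvx x y l Dx Dy; rewrite l0 l1 => /(_ isT).
have -> : l * x + (1 - l) * y = t.
  by rewrite /l /y; field; rewrite (gt_eqF yx0).
move=> cv.
have C : h * (s t - s x) <= (t - x) * (s y - s t).
  have := ler_wpM2l (ltW yx0) cv.
  have -> : (y - x) * (l * s x + (1 - l) * s y) = h * s x + (t - x) * s y.
    by rewrite /l /y; field; rewrite (gt_eqF yx0).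
  rewrite /y; lra.
rewrite /m ler_pdivrMr; last by rewrite subr_gt0.
have := ler_wpM2l (ltW N0) C.
rewrite mulrA hN mul1r => C'.
rewrite -/y; lra.
Unshelve. all: by end_near.
Qed.

Lemma D_open (a : \bar R) : open (scale_domain a).
Proof.
case: a => [r| |].
- rewrite (_ : scale_domain _ = [set x | r < x]); first exact: open_gt.
  by apply/seteqP; split => x; rewrite /scale_domain /= lte_fin.
- rewrite (_ : scale_domain _ = set0); first exact: open0.
  by apply/seteqP; split => x //=; rewrite ltNge leey.
- rewrite (_ : scale_domain _ = setT); first exact: openT.
  by apply/seteqP; split => x //= _; exact: ltNyr.
Qed.

Lemma s_meas (a : \bar R) (s : R -> R) : assumption1 a s -> measurable_fun (scale_domain a) s.
Proof.
move=> [_ _ sder _ _]; apply: open_continuous_measurable_fun; first exact: D_open.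
move=> t /set_mem Dt; apply: differentiable_continuous.
by apply/derivable1_diffP; exact: (sder t Dt).1.
Qed.

Lemma s1_meas (a : \bar R) (s : R -> R) : assumption1 a s ->
  measurable_fun (scale_domain a) (derive1 s).
Proof.
move=> A1; have [_ _ sder _ _] := A1.
have mD : measurable (scale_domain a) by apply: open_measurable; exact: D_open.
refine (@measurable_fun_cvg _ _ _ _
  (fun n (t : R) => n.+1%:R * (s (n.+1%:R^-1 + t) - s t)) _ _ _); last first.
  move=> t Dt; exact: dq_cvg (sder t Dt).1.
move=> n; apply: measurable_funM; first exact: measurable_cst.
apply: measurable_funB; last exact: s_meas.
apply: (measurable_comp mD); last 2 first.
- exact: s_meas.
- apply: measurable_funD; [exact: measurable_cst | exact: measurable_id].
move=> _ [t Dt <-]; rewrite /scale_domain /=; apply: (lt_trans Dt).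
by rewrite lte_fin ltrDr invr_gt0 ltr0n.
Qed.

End scale.
Section gen.
Context {R : realType} {d' : measure_display} {T : measurableType d'}.

Lemma mset_pos (E : set T) (f : T -> R) : measurable E -> measurable_fun E f ->
  measurable [set w | E w /\ 0 < f w].
Proof.
move=> mE mf; rewrite (_ : [set w | _] = E `&` f @^-1` `]0, +oo[).
  by apply: mf => //; exact: measurable_itv.
by apply/seteqP; split => w /=; rewrite in_itv /= andbT.
Qed.

Lemma mset_neg (E : set T) (f : T -> R) : measurable E -> measurable_fun E f ->
  measurable [set w | E w /\ f w < 0].
Proof.
move=> mE mf; rewrite (_ : [set w | _] = E `&` f @^-1` `]-oo, 0[).
  by apply: mf => //; exact: measurable_itv.
by apply/seteqP; split => w /=; rewrite in_itv /=.
Qed.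

Lemma mset_neq0 (E : set T) (f : T -> R) : measurable E -> measurable_fun E f ->
  measurable [set w | E w /\ f w != 0].
Proof.
move=> mE mf; rewrite (_ : [set w | _] = E `&` f @^-1` (~` [set 0])).
  by apply: mf => //; apply: measurableC.
by apply/seteqP; split => w /= [Ew H]; split => //; apply/eqP.
Qed.

Lemma mxdot k (X : 'I_k -> T -> R) (v : 'cV[R]_k) :
  (forall i, measurable_fun setT (X i)) -> measurable_fun setT (xdot X v).
Proof.
move=> mX; rewrite /xdot; apply: measurable_sum => i.
by apply: measurable_funM => //; exact: measurable_cst.
Qed.

Lemma mDX (a : \bar R) (F : T -> R) : measurable_fun setT F ->
  measurable [set w | (a < (F w)%:E)%E].
Proof.
move=> mF; rewrite (_ : [set w | _] = setT `&` F @^-1` scale_domain a).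
  by apply: mF => //; apply: open_measurable; exact: D_open.
by apply/seteqP; split => w //= [].
Qed.

Lemma mcompD (a : \bar R) (F : T -> R) (h : R -> R) : measurable_fun setT F ->
  measurable_fun (scale_domain a) h ->
  measurable_fun [set w | (a < (F w)%:E)%E] (h \o F).
Proof.
move=> mF mh; apply: (measurable_comp (F := scale_domain a)) => //.
- by apply: open_measurable; exact: D_open.
- by move=> _ [w Dw <-].
- apply: measurable_funS mF => //.
Qed.

End gen.
Section sigX.
Context {R : realType} {d : measure_display} {Omega : measurableType d} {k : nat}
  {X : 'I_k -> Omega -> R} (mX : forall i, measurable_fun setT (X i)).

Local Notation OX := (g_sigma_algebraType (sigmaX_gen X)).

Lemma sX_meas (A : set Omega) : <<s sigmaX_gen X>> A -> measurable A.
Proof.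
apply: smallest_sub; first exact: sigma_algebra_measurable.
move=> _ [i [B [mB ->]]]; rewrite -(setTI (X i @^-1` B)); exact: mX.
Qed.

Lemma mX_OX i : measurable_fun (setT : set OX) (X i).
Proof.
move=> _ B mB; rewrite setTI; apply: sub_sigma_algebra; exists i, B; split => //.
Qed.

Lemma OX_Omega (D : set Omega) (f : Omega -> R) :
  <<s sigmaX_gen X>> D -> measurable_fun (D : set OX) f -> measurable_fun D f.
Proof. by move=> sD mf _ B mB; apply: sX_meas; exact: mf. Qed.

Lemma OX_Omega_e (D : set Omega) (f : Omega -> \bar R) :
  <<s sigmaX_gen X>> D -> measurable_fun (D : set OX) f -> measurable_fun D f.
Proof. by move=> sD mf _ B mB; apply: sX_meas; exact: mf. Qed.

Lemma sigmaX_OX (f : 'cV[R]_k -> R) : sigmaX_meas X (fun w => f (xvec X w)) ->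
  measurable_fun (setT : set OX) (fun w => f (xvec X w)).
Proof. by move=> H _ B mB; rewrite setTI; exact: H. Qed.

Lemma sigmaX_OX_e (f : 'cV[R]_k -> \bar R) : sigmaX_meas_e X (fun w => f (xvec X w)) ->
  measurable_fun (setT : set OX) (fun w => f (xvec X w)).
Proof. by move=> H _ B mB; rewrite setTI; exact: H. Qed.

End sigX.
Section integ.
Context {d : measure_display} {Omega : measurableType d} {R : realType}
  (P : probability Omega R).

Lemma Rint_sum I (r : seq I) (F : I -> Omega -> R) (D : set Omega) :
  measurable D -> (forall i, P.-integrable D (EFin \o F i)) ->
  P.-integrable D (EFin \o (fun x => \sum_(i <- r) F i x)) /\
  \int[P]_(x in D) (\sum_(i <- r) F i x) = \sum_(i <- r) \int[P]_(x in D) F i x.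
Proof.
move=> mD iF; elim: r => [|h t [it IH]].
  split.
    apply: (eq_integrable _ (cst 0%E)) => //; last exact: integrable0.
    by move=> x _; rewrite /= big_nil.
  rewrite big_nil (@eq_Rintegral _ _ _ P D (fun=> 0)); last by move=> x _; rewrite big_nil.
  by rewrite /Rintegral integral0.
split.
  apply: (eq_integrable _ ((EFin \o F h) \+ (EFin \o (fun x => \sum_(i <- t) F i x)))) => //.
    by move=> x _; rewrite /= big_cons EFinD.
  exact: integrableD.
rewrite big_cons -IH -RintegralD //.
by apply: eq_Rintegral => x _; rewrite big_cons.
Qed.

Lemma ae_zero (B N : set Omega) (f : Omega -> R) :
  measurable B -> measurable N -> P N = 0%E ->
  P.-integrable B (EFin \o f) ->
  (forall w, B w -> ~ N w -> 0 <= f w) ->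
  (\int[P]_(w in B) (f w)%:E = 0)%E ->
  P.-negligible [set w | B w /\ f w != 0].
Proof.
move=> mB mN N0 iB f0 I0.
have mBN : measurable (B `\` N) by exact: measurableD.
have mf : measurable_fun (B `\` N) (EFin \o f).
  apply: measurable_funS (measurable_int P iB) => //; exact: subDsetl.
rewrite (negligible_integral mN mB iB N0) in I0.
have : (\int[P]_(w in B `\` N) `|(EFin \o f) w| = 0)%E.
  rewrite -I0; apply: eq_integral => w /set_mem [Bw Nw] /=.
  by rewrite ger0_norm // f0.
move/(ae_eq_integral_abs _ mBN mf) => [M [mM M0 HM]].
apply: (@negligibleS _ _ _ _ (N `|` M)); last first.
  by apply: negligibleU; [exists N | exists M]; split.
move=> w [Bw fw]; have [Nw|Nw] := pselect (N w); [by left|right].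
apply: HM => /= H; move: fw; rewrite (_ : f w = 0) ?eqxx //.
by have := H (conj Bw Nw); rewrite /cst => -[].
Qed.

Lemma Rint_ae0 (N : set Omega) (f : Omega -> R) :
  measurable N -> P N = 0%E -> P.-integrable setT (EFin \o f) ->
  (forall w, ~ N w -> f w = 0) -> \int[P]_(w in setT) f w = 0.
Proof.
move=> mN N0 iT f0.
rewrite /Rintegral (negligible_integral mN _ iT N0) //.
rewrite (eq_integral (fun=> 0%E)) ?integral0 //.
by move=> w /set_mem [_ Nw] /=; rewrite f0.
Qed.


Lemma quadE k (X : 'I_k -> Omega -> R) f (u v : 'cV[R]_k) : XXf_integrable P X f ->
  P.-integrable setT (EFin \o (fun w => xdot X u w * xdot X v w * f w)) /\
  (u^T *m EXXf P X f *m v) ord0 ord0 = \int[P]_(w in setT) (xdot X u w * xdot X v w * f w).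
Proof.
move=> iX.
have E : (fun w => xdot X u w * xdot X v w * f w) = (fun w => \sum_(i < k) \sum_(j < k)
     (u i ord0 * v j ord0) * (X i w * X j w * f w)).
  apply/funext => w; rewrite /xdot big_distrl /= big_distrl /=; apply: eq_bigr => i _.
  rewrite big_distrr /= big_distrl /=; apply: eq_bigr => j _; ring.
have iT : forall i j, P.-integrable setT (EFin \o (fun w => (u i ord0 * v j ord0) * (X i w * X j w * f w))).
  move=> i j; apply: (eq_integrable _ (fun w => ((u i ord0 * v j ord0)%:E * (X i w * X j w * f w)%:E)%E)) => //.
  exact: integrableZl.
have iI : forall i, P.-integrable setT (EFin \o (fun w => \sum_(j < k) (u i ord0 * v j ord0) * (X i w * X j w * f w))).
  by move=> i; have [] := Rint_sum _ (index_enum _) _ _ measurableT (iT i).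
have [iS ES] := Rint_sum _ (index_enum _) _ _ measurableT iI.
rewrite E; split => //; rewrite ES.
rewrite !mxE; under eq_bigr do rewrite !mxE big_distrl /=.
rewrite exchange_big /=; apply: eq_bigr => i _.
have [_ ->] := Rint_sum _ (index_enum _) _ _ measurableT (iT i).
apply: eq_bigr => j _; rewrite !mxE RintegralZl //; [ring | exact: iX].
Qed.

End integ.
Section supp.
Context {R : realType} (k : nat).
Lemma ballE (x y : 'cV[R]_k) e : ball x e y <-> (0 < e /\ forall i j, `|x i j - y i j| < e).
Proof.
rewrite /ball /=. split.
  move=> [e0 H]; split => // i j; exact: H.
move=> [e0 H]; split => // i j; exact: H.
Qed.

Context {d : measure_display} {Omega : measurableType d} (P : probability Omega R)
  (X : 'I_k -> Omega -> R) (mX : forall i, measurable_fun setT (X i)).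

Lemma ball_meas (c : 'cV[R]_k) r : measurable (xvec X @^-1` ball c r).
Proof.
have [r0|r0] := ltP 0 r; last first.
  rewrite (_ : _ @^-1` _ = set0) //; apply/seteqP; split => // w /ballE [] /=.
  by rewrite ltNge r0.
rewrite (_ : _ @^-1` _ = \bigcap_(i in [set: 'I_k]) (setT `&` X i @^-1` ball (c i ord0) r)).
  apply: fin_bigcap_measurable; first exact: finite_finset.
  move=> i _; apply: mX => //; apply: open_measurable; exact: ball_open.
apply/seteqP; split => w /=.
  move/ballE => [_ H] i _; split => //; have := H i ord0; rewrite /xvec mxE //.
move=> H; apply/ballE; split => // i j; rewrite (ord1 j) /xvec mxE.
by have [_ ] := H i I.
Qed.

Definition cq (q : {ffun 'I_k -> rat}) : 'cV[R]_k := \col_i ratr (q i).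

Definition Fb (n : nat) : set Omega :=
  match unpickle n : option ({ffun 'I_k -> rat} * rat) with
  | Some j => if P (xvec X @^-1` ball (cq j.1) (ratr j.2)) == 0%E
              then xvec X @^-1` ball (cq j.1) (ratr j.2) else set0
  | None => set0
  end.

Lemma support_negl : P.-negligible [set w | ~ supportX P X (xvec X w)].
Proof.
apply: (@negligibleS _ _ _ _ (\bigcup_n Fb n)).
  move=> w /= /existsNP [e /not_implyP [e0 /negP]].
  rewrite -leNgt => Pe.
  have Pe0 : P (xvec X @^-1` ball (xvec X w) e) = 0%E.
    by apply/eqP; rewrite eq_le Pe measure_ge0.
  have [q Hq] : exists q : 'I_k -> rat, forall i, `|X i w - ratr (q i)| < e / 3.
    suff [f Hf] : {f : 'I_k -> rat & forall i, `|X i w - ratr (f i)| < e / 3} by exists f.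
    apply: (@boolp.choice 'I_k rat (fun i q => `|X i w - ratr q| < e / 3)) => i.
    have [q] := @rat_in_itvoo R (X i w - e / 3) (X i w + e / 3) ltac:(lra).
    rewrite in_itv /= => /andP [h1 h2]; exists q.
    rewrite ltr_norml; apply/andP; split; lra.
  have [r] := @rat_in_itvoo R (e / 3) (e * 2 / 3) ltac:(lra).
  rewrite in_itv /= => /andP [r1 r2].
  pose j := ([ffun i => q i], r).
  exists (pickle j) => //.
  rewrite /Fb pickleK /=.
  have sub : xvec X @^-1` ball (cq j.1) (ratr j.2) `<=` xvec X @^-1` ball (xvec X w) e.
    move=> w' /= /ballE [_ H]; apply/ballE; split => // i i'.
    have := H i i'; have := Hq i; rewrite /cq /xvec !mxE ffunE /=.
    move=> h1 h2.
    have := ler_normD (X i w - ratr (q i)) (ratr (q i) - X i w').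
    rewrite (_ : X i w - ratr (q i) + (ratr (q i) - X i w') = X i w - X i w'); last by ring.
    move=> h3; have h4 := h2; rewrite distrC in h4; lra.
  have -> : P (xvec X @^-1` ball (cq j.1) (ratr j.2)) == 0%E.
    apply/eqP/eqP; rewrite eq_le measure_ge0 andbT -Pe0.
    by apply: le_measure => //; rewrite inE; exact: ball_meas.
  apply/ballE; split; first by apply: lt_trans r1; apply: divr_gt0.
  move=> i i'; rewrite /cq /xvec !mxE ffunE /=.
  have := Hq i; rewrite distrC => h; lra.
apply: negligible_bigcup => n; rewrite /Fb.
case: (unpickle n) => [j|]; last exact: negligible_set0.
case: eqP => [h|_]; last exact: negligible_set0.
by exists (xvec X @^-1` ball (cq j.1) (ratr j.2)); split => //; exact: ball_meas.
Qed.
End supp.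
Section zero.
Context {R : realType} {d : measure_display} {Omega : measurableType d}
  (P : probability Omega R) (k : nat)
  (X : 'I_k -> Omega -> R) (Y : Omega -> R) (mu : 'cV[R]_k -> R)
  (sig2 : 'cV[R]_k -> \bar R) (a : \bar R) (s : R -> R).
Hypotheses (mY : measurable_fun setT Y) (mX : forall i, measurable_fun setT (X i))
  (cm : is_cond_mean P X Y mu) (cv : is_cond_var P X Y mu sig2) (A1 : assumption1 a s).
Variables (c : R) (b g v1 v2 : 'cV[R]_k).
Hypotheses (c0 : 0 < c) (A2 : forall x, supportX P X x -> (c%:E <= sig2 x)%E).

Local Notation OX := (g_sigma_algebraType (sigmaX_gen X)).

Lemma zero_arg (N : set Omega) : measurable N -> P N = 0%E ->
  (forall w, ~ N w -> ((a < (xdot X g w)%:E)%E /\ 0 < s (xdot X g w)) /\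
      xdot X v1 w + derive1 s (xdot X g w) * eres X Y s b g w * xdot X v2 w = 0) ->
  P.-negligible [set w | xdot X v2 w != 0].
Proof.
move=> mN N0 HN.
have [cmX iY imu cmI] := cm.
have [cvX cv0 cvI] := cv.
pose Fx := xdot X g.
pose DX := [set w | (a < (Fx w)%:E)%E].
have mXO : forall i, measurable_fun (setT : set OX) (X i) := @mX_OX _ _ _ _ X.
have mxO : forall v, measurable_fun (setT : set OX) (xdot X v).
  by move=> v; exact: (@mxdot R _ OX k X v mXO).
have mDXO : measurable (DX : set OX) := @mDX R _ OX a Fx (mxO g).
have msO : measurable_fun (DX : set OX) (s \o Fx) :=
  @mcompD R _ OX a Fx s (mxO g) (s_meas _ _ A1).
have ms1O : measurable_fun (DX : set OX) (derive1 s \o Fx) :=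
  @mcompD R _ OX a Fx _ (mxO g) (s1_meas _ _ A1).
have mmuO : measurable_fun (setT : set OX) (fun w => mu (xvec X w)) := sigmaX_OX _ cmX.
have rDX : forall (f : OX -> R), measurable_fun setT f -> measurable_fun (DX : set OX) f.
  by move=> f mf; apply: measurable_funS mf.
pose q w := derive1 s (Fx w) * xdot X v2 w.
pose H w := (q w * xdot X b w - s (Fx w) * xdot X v1 w) - q w * mu (xvec X w).
have mq : measurable_fun (DX : set OX) q.
  by apply: measurable_funM => //; exact: rDX.
have mqH : measurable_fun (DX : set OX) (fun w => q w * H w).
  apply: measurable_funM => //; apply: measurable_funB; last first.
    by apply: measurable_funM => //; exact: rDX.
  apply: measurable_funB; first by apply: measurable_funM => //; exact: rDX.
  by apply: measurable_funM => //; exact: rDX.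
pose C0 := [set w : OX | DX w /\ 0 < (s \o Fx) w].
have mC0 : measurable C0 := mset_pos _ _ mDXO msO.
have C0DX : C0 `<=` DX by move=> w [].
pose C := [set w : OX | C0 w /\ xdot X v2 w != 0].
have mC : measurable C.
  by apply: mset_neq0 => //; apply: measurable_funS (mxO v2).
have CDX : C `<=` DX by move=> w [[]].
have mqHC : measurable_fun C (fun w => q w * H w) := measurable_funS mDXO CDX mqH.
pose B1 := [set w : OX | C w /\ 0 < q w * H w].
pose B2 := [set w : OX | C w /\ q w * H w < 0].
have mB1 : measurable B1 := mset_pos _ _ mC mqHC.
have mB2 : measurable B2 := mset_neg _ _ mC mqHC.
have mB1' : measurable (B1 : set Omega) := sX_meas mX _ mB1.
have mB2' : measurable (B2 : set Omega) := sX_meas mX _ mB2.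
have mC' : measurable (C : set Omega) := sX_meas mX _ mC.
have qn0 : forall w, C w -> q w != 0.
  move=> w [[Dw _] v2w]; apply: mulf_neq0 => //.
  by rewrite gt_eqF //; exact: (s1_pos _ _ A1).
have key : forall w, C w -> ~ N w -> q w * (Y w - mu (xvec X w)) = H w.
  move=> w [[Dw Sw] v2w] Nw; have [_ E] := HN w Nw.
  set S := s (Fx w) in Sw *.
  have St : S * S^-1 = 1 by rewrite divff // gt_eqF.
  apply/eqP; rewrite -subr_eq0; apply/eqP.
  have -> : q w * (Y w - mu (xvec X w)) - H w =
    S * (xdot X v1 w + derive1 s (Fx w) * eres X Y s b g w * xdot X v2 w)
    - derive1 s (Fx w) * (Y w - xdot X b w) * xdot X v2 w * (S * S^-1 - 1).
    by rewrite /H /q /eres /Fx -/S; ring.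
  rewrite St E; ring.
have mYmu : measurable_fun setT (fun w => Y w - mu (xvec X w)).
  apply: measurable_funB => //; apply: (OX_Omega mX) => //.
  exact: (@measurableT _ OX).
have iS : forall (B : set Omega) (f : Omega -> \bar R), measurable B ->
    P.-integrable setT f -> P.-integrable B f.
  by move=> B f mB; apply: integrableS.
have Bfin : forall (B : set Omega), measurable B ->
    (\int[P]_(w in B) (mu (xvec X w))%:E)%E \is a fin_num.
  by move=> B mB; apply: integrable_fin_num => //; exact: iS.
have iYmu : forall (B : set Omega), measurable B ->
    P.-integrable B (EFin \o (fun w => Y w - mu (xvec X w))).
  move=> B mB; apply: (eq_integrable _ ((EFin \o Y) \- (fun w => (mu (xvec X w))%:E))%E) => //.
  by apply: integrableB => //; exact: iS.
have imuY : forall (B : set Omega), measurable B ->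
    P.-integrable B (EFin \o (fun w => mu (xvec X w) - Y w)).
  move=> B mB; apply: (eq_integrable _ ((fun w => (mu (xvec X w))%:E) \- (EFin \o Y))%E) => //.
  by apply: integrableB => //; exact: iS.
have negN : P.-negligible N by exists N; split.
have nB1 : P.-negligible (B1 : set Omega).
  have I1 : (\int[P]_(w in (B1 : set Omega)) ((Y w - mu (xvec X w))%:E) = 0)%E.
    rewrite (eq_integral (fun w => ((Y w)%:E - (mu (xvec X w))%:E)%E)); last first.
      by move=> w _; rewrite EFinB.
    rewrite integralB_EFin //; [|exact: iS|exact: iS].
    by rewrite cmI //; exact: subee (Bfin _ mB1').
  have := ae_zero P _ _ _ mB1' mN N0 (iYmu _ mB1') _ I1.
  have pos : forall w, B1 w -> ~ N w -> 0 < Y w - mu (xvec X w).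
    move=> w [Cw qH] Nw; move: qH; rewrite -(key w Cw Nw) => h; nra.
  move=> /(_ (fun w B1w Nw => ltW (pos w B1w Nw))) nZ.
  apply: (negligibleS _ (negligibleU negN nZ)) => w B1w.
  have [Nw|Nw] := pselect (N w); [by left | right; split => //].
  by rewrite gt_eqF //; exact: pos.
have nB2 : P.-negligible (B2 : set Omega).
  have I2 : (\int[P]_(w in (B2 : set Omega)) ((mu (xvec X w) - Y w)%:E) = 0)%E.
    rewrite (eq_integral (fun w => ((mu (xvec X w))%:E - (Y w)%:E)%E)); last first.
      by move=> w _; rewrite EFinB.
    rewrite integralB_EFin //; [|exact: iS|exact: iS].
    by rewrite cmI //; exact: subee (Bfin _ mB2').
  have := ae_zero P _ _ _ mB2' mN N0 (imuY _ mB2') _ I2.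
  have pos : forall w, B2 w -> ~ N w -> 0 < mu (xvec X w) - Y w.
    move=> w [Cw qH] Nw; move: qH; rewrite -(key w Cw Nw) => h; nra.
  move=> /(_ (fun w B1w Nw => ltW (pos w B1w Nw))) nZ.
  apply: (negligibleS _ (negligibleU negN nZ)) => w B1w.
  have [Nw|Nw] := pselect (N w); [by left | right; split => //].
  by rewrite gt_eqF //; exact: pos.
have [M [mM M0 HM]] := negligibleU (negligibleU negN nB1) nB2.
have YmuC : forall w, C w -> ~ M w -> Y w - mu (xvec X w) = 0.
  move=> w Cw Mw.
  have Nw : ~ N w by move=> Nw; apply: Mw; apply: HM; left; left.
  have nB1w : ~ B1 w by move=> h; apply: Mw; apply: HM; left; right.
  have nB2w : ~ B2 w by move=> h; apply: Mw; apply: HM; right.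
  have qH0 : q w * H w = 0.
    apply/eqP; rewrite eq_le; apply/andP; split; rewrite leNgt; apply/negP => h.
      by apply: nB1w.
    by apply: nB2w.
  move: qH0; rewrite -(key w Cw Nw) => /eqP.
  by rewrite mulf_eq0 (negbTE (qn0 w Cw)) /= mulf_eq0 (negbTE (qn0 w Cw)) /= => /eqP.
have msig : measurable_fun (C : set Omega) (fun w => sig2 (xvec X w)).
  apply: (OX_Omega_e mX) => //; apply: (measurable_funS (@measurableT _ OX)) => //.
  exact: sigmaX_OX_e.
have Isig : (\int[P]_(w in (C : set Omega)) sig2 (xvec X w) = 0)%E.
  rewrite -cvI //.
  rewrite (ge0_negligible_integral mM mC' _ _ M0); last 2 first.
  - apply/measurable_EFinP; apply: measurable_funX.
    exact: measurable_funS mYmu.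
  - by move=> w _; rewrite lee_fin sqr_ge0.
  rewrite (eq_integral (fun=> 0%E)) ?integral0 //.
  by move=> w /set_mem [Cw Mw]; rewrite YmuC // expr0n.
have : (\int[P]_(w in (C : set Omega)) `|sig2 (xvec X w)| = 0)%E.
  by rewrite -Isig; apply: eq_integral => w _; rewrite gee0_abs.
move/(ae_eq_integral_abs _ mC' msig) => [M2 [mM2 M20 HM2]].
have [S0 [mS0 S00 HS0]] := support_negl k P X mX.
apply: (negligibleS _ (negligibleU (negligibleU negN (ex_intro _ M2 (And3 mM2 M20 (@subset_refl _ M2))))
   (ex_intro _ S0 (And3 mS0 S00 (@subset_refl _ S0))))).
move=> w /= v2w.
have [Nw|Nw] := pselect (N w); first by left; left.
have [M2w|M2w] := pselect (M2 w); first by left; right.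
have [S0w|S0w] := pselect (S0 w); first by right.
exfalso.
have [[Dw Sw] _] := HN w Nw.
have Cw : C w by split.
have sig0 : sig2 (xvec X w) = 0%E.
  apply: contrapT => h; apply: M2w; apply: HM2 => /= H0; apply: h; exact: H0.
have supp : supportX P X (xvec X w).
  by apply: contrapT => h; apply: S0w; apply: HS0.
have := A2 _ supp; rewrite sig0 lee_fin => h; have := lt_le_trans c0 h; by rewrite ltxx.
Qed.
End zero.
Section main.
Context {R : realType} {d : measure_display} {Omega : measurableType d}
  (P : probability Omega R) (k : nat)
  (X : 'I_k -> Omega -> R) (Y : Omega -> R) (mu : 'cV[R]_k -> R)
  (sig2 : 'cV[R]_k -> \bar R) (a : \bar R) (s : R -> R).
Hypotheses (mY : measurable_fun setT Y) (mX : forall i, measurable_fun setT (X i))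
  (cm : is_cond_mean P X Y mu) (cv : is_cond_var P X Y mu sig2) (A1 : assumption1 a s).
Variables (c : R) (b g : 'cV[R]_k).
Hypotheses (c0 : 0 < c) (A2 : forall x, supportX P X x -> (c%:E <= sig2 x)%E)
  (ThG : Theta_gamma P X a s g)
  (i0 : XXf_integrable P X (psi_w0 X s g))
  (i1 : XXf_integrable P X (psi_w1 X Y s b g))
  (i2 : XXf_integrable P X (psi_w2 X Y s b g))
  (unit0 : EXXf P X (psi_w0 X s g) \in unitmx).

Lemma vzero (v : 'cV[R]_k) (Nz : set Omega) : measurable Nz -> P Nz = 0%E ->
  (forall w, ~ Nz w -> xdot X v w = 0) -> v = 0.
Proof.
move=> mNz Nz0 Hv.
set M0 := EXXf P X (psi_w0 X s g).
have Mv0 : M0 *m v = 0.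
  apply/matrixP => i j; rewrite (ord1 j) [RHS]mxE.
  have [iq eq] := quadE P k X (psi_w0 X s g) (delta_mx i ord0) v i0.
  rewrite trmx_delta -rowE -row_mul mxE in eq.
  rewrite eq; apply: (Rint_ae0 P _ _ mNz Nz0 iq) => w Nw.
  by rewrite Hv // mulr0 mul0r.
by rewrite -(mulKmx unit0 v) Mv0 mulmx0.
Qed.

Lemma EXXf_sym f : (EXXf P X f)^T = EXXf P X f.
Proof.
apply/matrixP => i j; rewrite !mxE; apply: eq_Rintegral => w _; ring.
Qed.


Lemma iD {f1 f2 : Omega -> R} : P.-integrable setT (EFin \o f1) ->
  P.-integrable setT (EFin \o f2) ->
  P.-integrable setT (EFin \o (fun w => f1 w + f2 w)).
Proof.
move=> h1 h2; apply: (eq_integrable _ ((EFin \o f1) \+ (EFin \o f2))%E) => //.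
exact: integrableD.
Qed.

Lemma posQ (v : 'cV[R]_(k + k)) : v != 0 -> 0 < (v^T *m Psi P X Y s b g *m v) ord0 ord0.
Proof.
have [v1 [v2 ->]] : exists v1 v2, v = col_mx v1 v2.
  by exists (usubmx v), (dsubmx v); rewrite vsubmxK.
move=> v0.
rewrite /Psi tr_col_mx mul_row_block mul_row_col !mulmxDl.
have addE : forall (A B : 'M[R]_1), (A + B) ord0 ord0 = A ord0 ord0 + B ord0 ord0.
  by move=> A B; rewrite mxE.
rewrite !addE.
have [j00 ->] := quadE P k X _ v1 v1 i0.
have [j21 ->] := quadE P k X _ v2 v1 i1.
have [j12 ->] := quadE P k X _ v1 v2 i1.
have [j22 ->] := quadE P k X _ v2 v2 i2.
pose qf w := xdot X v1 w * xdot X v1 w * psi_w0 X s g w +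
  xdot X v2 w * xdot X v1 w * psi_w1 X Y s b g w +
  xdot X v1 w * xdot X v2 w * psi_w1 X Y s b g w +
  xdot X v2 w * xdot X v2 w * psi_w2 X Y s b g w.
have iq : P.-integrable setT (EFin \o qf) := iD (iD (iD j00 j21) j12) j22.
have -> : \int[P]_(w in setT) (xdot X v1 w * xdot X v1 w * psi_w0 X s g w) +
  \int[P]_(w in setT) (xdot X v2 w * xdot X v1 w * psi_w1 X Y s b g w) +
  (\int[P]_(w in setT) (xdot X v1 w * xdot X v2 w * psi_w1 X Y s b g w) +
  \int[P]_(w in setT) (xdot X v2 w * xdot X v2 w * psi_w2 X Y s b g w)) =
  \int[P]_(w in setT) qf w.
  rewrite addrA /qf (RintegralD measurableT (iD (iD j00 j21) j12) j22).
  rewrite (RintegralD measurableT (iD j00 j21) j12).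
  by rewrite (RintegralD measurableT j00 j21).
pose Fx := xdot X g.
pose G := [set w | (a < (Fx w)%:E)%E /\ 0 < s (Fx w)].
have mFx : measurable_fun setT Fx := mxdot k X g mX.
have mG : measurable G.
  exact: (mset_pos _ _ (mDX a Fx mFx) (mcompD a Fx s mFx (s_meas _ _ A1))).
have nG0 : P (~` G) = 0%E.
  rewrite probability_setC //.
  by move: ThG; rewrite /Theta_gamma /= => ->; rewrite subee.
have mnG : measurable (~` G) by exact: measurableC.
pose u w := derive1 s (Fx w) * eres X Y s b g w.
have qfE : forall w, qf w = psi_w0 X s g w * (xdot X v1 w + u w * xdot X v2 w) ^+ 2.
  by move=> w; rewrite /qf /psi_w0 /psi_w1 /psi_w2 /u /Fx; ring.
have qf0 : forall w, G w -> 0 <= qf w.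
  move=> w [_ Sw]; rewrite qfE; apply: mulr_ge0; last exact: sqr_ge0.
  by rewrite /psi_w0 invr_ge0 ltW.
have Ige0 : 0 <= \int[P]_(w in setT) qf w.
  rewrite /Rintegral (negligible_integral mnG _ iq nG0) //.
  apply: fine_ge0; apply: integral_ge0 => w [_ /contrapT Gw].
  by rewrite lee_fin qf0.
rewrite lt_def Ige0 andbT.
apply: contraNneq v0 => I0.
have I0e : (\int[P]_(w in setT) (qf w)%:E = 0)%E.
  have h := fineK (integrable_fin_num measurableT iq).
  rewrite /Rintegral in I0; rewrite /= I0 in h; by rewrite -h.
have negG : P.-negligible (~` G) by exists (~` G); split.
have Z1 := ae_zero P _ _ _ measurableT mnG nG0 iq
  (fun w _ nGw => qf0 w (contrapT nGw)) I0e.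
have [N1 [mN1 N10 HN1]] := negligibleU negG Z1.
have HN : forall w, ~ N1 w -> ((a < (xdot X g w)%:E)%E /\ 0 < s (xdot X g w)) /\
    xdot X v1 w + derive1 s (xdot X g w) * eres X Y s b g w * xdot X v2 w = 0.
  move=> w N1w.
  have Gw : G w by apply: contrapT => h; apply: N1w; apply: HN1; left.
  have q0 : qf w = 0.
    by apply/eqP; apply: contrapT => /negP h; apply: N1w; apply: HN1; right.
  split => //.
  move: q0; rewrite qfE => /eqP; rewrite mulf_eq0 => /orP [|].
    by rewrite /psi_w0 invr_eq0 gt_eqF //; case: Gw.
  by rewrite sqrf_eq0 => /eqP.
have [Z2 [mZ2 Z20 HZ2]] := zero_arg P k X Y mu sig2 a s mY mX cm cv A1 c b g v1 v2 c0 A2 N1 mN1 N10 HN.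
have [Nz [mNz Nz0 HNz]] := negligibleU (ex_intro _ N1 (And3 mN1 N10 (@subset_refl _ N1)))
  (ex_intro _ Z2 (And3 mZ2 Z20 (@subset_refl _ Z2))).
have x2 : forall w, ~ Nz w -> xdot X v2 w = 0.
  move=> w Nzw; apply/eqP; apply: contrapT => /negP h; apply: Nzw; apply: HNz; right.
  exact: HZ2.
have x1 : forall w, ~ Nz w -> xdot X v1 w = 0.
  move=> w Nzw; have [_] := HN w (fun h => Nzw (HNz w (or_introl h))).
  by rewrite x2 // mulr0 addr0.
by rewrite (vzero _ _ mNz Nz0 x1) (vzero _ _ mNz Nz0 x2) col_mx0.
Qed.
End main.
Theorem lemmaA2 (R : realType) (d : measure_display) (Omega : measurableType d)
    (P : probability Omega R) (k : nat) (hk : (0 < k)%N)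
    (X : 'I_k -> Omega -> R) (Y : Omega -> R)
    (mu : 'cV[R]_k -> R) (sig2 : 'cV[R]_k -> \bar R)
    (a : \bar R) (s : R -> R) (Bb Bg : set 'cV[R]_k) :
  measurable_fun setT Y ->
  (forall i, measurable_fun setT (X i)) ->
  (* the first component of X equals 1 *)
  (forall w, X (@Ordinal k 0 hk) w = 1) ->
  (* mu(X) = E[Y | X] and sig2(X) = E[(Y - mu(X))^2 | X] *)
  is_cond_mean P X Y mu ->
  is_cond_var P X Y mu sig2 ->
  (* Assumption 1 *)
  assumption1 a s ->
  (* Assumption 2 *)
  (exists c : R, 0 < c /\ forall x, supportX P X x -> (c%:E <= sig2 x)%E) ->
  (* Assumption 4 *)
  (forall g, Theta_gamma P X a s g ->
     XXf_integrable P X (psi_w0 X s g) /\ EXXf P X (psi_w0 X s g) \in unitmx) ->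
  (* B = B_beta x B_gamma, compact, B_gamma inside Theta_gamma *)
  compact Bb -> compact Bg -> Bg `<=` Theta_gamma P X a s ->
  (* Psi(theta) is well defined on B *)
  (forall b g, Bb b -> Bg g -> Psi_exists P X Y s b g) ->
  forall b g, Bb b -> Bg g -> posdef (Psi P X Y s b g).
Proof.
move=> mY mX X0 cm cv A1 [c [c0 A2]] A4 _ _ BgT Pex b g Bb_b Bg_g.
have ThG := BgT g Bg_g.
have [_ unit0] := A4 g ThG.
have [i0 i1 i2] := Pex b g Bb_b Bg_g.
split.
  by rewrite /Psi tr_block_mx !EXXf_sym.
move=> v v0.
exact: (posQ _ _ _ _ _ _ _ _ mY mX cm cv A1 _ _ _ c0 A2 ThG i0 i1 i2 unit0 _ v0).
Qed.
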